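(* Consider the uncertain system \[ \dot x = f(x) + g(x)u + \varphi(x,u)\theta,\qquad \varphi(x,u)=[F(x)\;\; G(x)\,\mathrm{diag}(u)]\in\mathbb{R}^{n\times(p+m)}, \] with known locally Lipschitz $f:\mathbb{R}^n\to\mathbb{R}^n$, $g:\mathbb{R}^n\to\mathbb{R}^{n\times m}$, known $F:\mathbb{R}^n\to\mathbb{R}^{n\times p}$, $G:\mathbb{R}^n\to\mathbb{R}^{n\times m}$, and unknown $\theta\in\mathbb{R}^{p+m}$ lying in a known hyperrectangle $\Theta=[\underline{\theta}_1,\overline{\theta}_1]\times\cdots\times[\underline{\theta}_{p+m},\overline{\theta}_{p+m}]$. Let $x(\cdot)$ be a solution of this system under an input signal $u(\cdot)$, defined on an interval $\mathcal{I}\subseteq\mathbb{R}_{\ge0}$. Fix $\Delta t>0$ and for $t\ge\Delta t$ in $\mathcal{I}$ define \[ \Delta x(t)=\int_{t-\Delta t}^t\dot x(s)\,ds,\quad \mathcal{F}(t)=\int_{t-\Delta t}^t f(x(s))\,ds,\quad \mathcal{G}(t)=\int_{t-\Delta t}^t g(x(s))u(s)\,ds,\quad \mathcal{S}(t)=\int_{t-\Delta t}^t\varphi(x(s),u(s))\,ds. \] Let $\{t_k\}_{k\ge0}$ be a strictly increasing sequence of times with $t_0=0$. At each time $t$ a history stack $\{\Delta x_j(t),\mathcal{F}_j(t),\mathcal{G}_j(t),\mathcal{S}_j(t)\}_{j\in\mathcal{M}(t)}$, $\mathcal{M}(t)=\{1,\dots,M(t)\}$, is available, where for each $j$ there is some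 $t_i\in[\Delta t,t]$ with $(\Delta x_j(t),\mathcal{F}_j(t),\mathcal{G}_j(t),\mathcal{S}_j(t))=(\Delta x(t_i),\mathcal{F}(t_i),\mathcal{G}(t_i),\mathcal{S}(t_i))$. Fix $\varepsilon>0$. Set $\Xi_0=\Theta$ and, for $k\ge1$, given $\Xi_{k-1}=\{\theta: A_{k-1}\theta\le b_{k-1}\}$ (its halfspace representation), define for each $i\in\{1,\dots,p+m\}$ \[ \underline{\theta}_i^k=\min\theta_i,\qquad \overline{\theta}_i^k=\max\theta_i \] subject to $-\varepsilon\mathbf{1}_n\le \Delta x_j(t_k)-\mathcal{F}_j(t_k)-\mathcal{G}_j(t_k)-\mathcal{S}_j(t_k)\theta\le\varepsilon\mathbf{1}_n$ for all $j\in\mathcal{M}(t_k)$ and $A_{k-1}\theta\le b_{k-1}$, and set $\Xi_k=[\underline{\theta}_1^k,\overline{\theta}_1^k]\times\cdots\times[\underline{\theta}_{p+m}^k,\overline{\theta}_{p+m}^k]$. Then $\Xi_k\subseteq\Xi_{k-1}\subseteq\Theta$ for all $k\ge1$, and the true parameter satisfies $\theta\in\Xi_k$ for all $k\in\mathbb{Z}_{\ge0}$.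
   Context: $\mathbf{1}_n$ denotes the vector of ones in $\mathbb{R}^n$; vector inequalities are componentwise. $\theta_i$ denotes the $i$th component of $\theta$. $\mathrm{diag}(u)$ is the diagonal matrix with the entries of $u$ on its diagonal. *)

(* Defs.v *)
From HB Require Import structures.
From mathcomp Require Import all_boot all_order all_algebra.
From mathcomp Require Import all_classical all_reals all_analysis.
Set Implicit Arguments. Unset Strict Implicit. Unset Printing Implicit Defensive.
Import Order.TTheory GRing.Theory Num.Theory.
Import numFieldNormedType.Exports.
Local Open Scope classical_set_scope.
Local Open Scope ring_scope.

(* max-norm of a matrix (all norms are equivalent in finite dimension) *)
Definition mxmaxnorm (R : realType) (a b : nat) (A : 'M[R]_(a, b)) : R :=
  \big[Num.max/0]_(i < a) \big[Num.max/0]_(j < b) `|A i j|.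

Definition locally_lipschitz (R : realType) (n a b : nat)
    (h : 'cV[R]_n -> 'M[R]_(a, b)) : Prop :=
  forall x0 : 'cV[R]_n, exists r : R, 0 < r /\ exists L : R,
    forall y z : 'cV[R]_n, mxmaxnorm (y - x0) < r -> mxmaxnorm (z - x0) < r ->
      mxmaxnorm (h y - h z) <= L * mxmaxnorm (y - z).

Definition phi (R : realType) (n p m : nat)
    (F : 'cV[R]_n -> 'M[R]_(n, p)) (G : 'cV[R]_n -> 'M[R]_(n, m))
    (x : 'cV[R]_n) (u : 'cV[R]_m) : 'M[R]_(n, p + m) :=
  row_mx (F x) (G x *m diag_mx u^T).

Definition mxint (R : realType) (r c : nat) (a b : R)
    (h : R -> 'M[R]_(r, c)) : 'M[R]_(r, c) :=
  \matrix_(i, j) Rintegral (@lebesgue_measure R) `[a, b] (fun s => h s i j).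

Definition xdot (R : realType) (n : nat) (x : R -> 'cV[R]_n) : R -> 'cV[R]_n :=
  fun s => \col_i (derive1 (fun t => x t i 0) s).

Definition is_solution (R : realType) (n p m : nat)
    (f : 'cV[R]_n -> 'cV[R]_n) (g : 'cV[R]_n -> 'M[R]_(n, m))
    (F : 'cV[R]_n -> 'M[R]_(n, p)) (G : 'cV[R]_n -> 'M[R]_(n, m))
    (theta : 'cV[R]_(p + m)) (I : set R)
    (x : R -> 'cV[R]_n) (u : R -> 'cV[R]_m) : Prop :=
  forall t, interior I t ->
    (forall i : 'I_n, derivable (fun s => x s i 0) t 1) /\
    xdot x t = f (x t) + g (x t) *m u t + phi F G (x t) (u t) *m theta.

Definition DeltaX (R : realType) (n : nat) (dt : R) (x : R -> 'cV[R]_n) (t : R) :=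
  mxint (t - dt) t (xdot x).
Definition calF (R : realType) (n : nat) (f : 'cV[R]_n -> 'cV[R]_n) (dt : R)
    (x : R -> 'cV[R]_n) (t : R) :=
  mxint (t - dt) t (fun s => f (x s)).
Definition calG (R : realType) (n m : nat) (g : 'cV[R]_n -> 'M[R]_(n, m)) (dt : R)
    (x : R -> 'cV[R]_n) (u : R -> 'cV[R]_m) (t : R) :=
  mxint (t - dt) t (fun s => g (x s) *m u s).
Definition calS (R : realType) (n p m : nat)
    (F : 'cV[R]_n -> 'M[R]_(n, p)) (G : 'cV[R]_n -> 'M[R]_(n, m)) (dt : R)
    (x : R -> 'cV[R]_n) (u : R -> 'cV[R]_m) (t : R) :=
  mxint (t - dt) t (fun s => phi F G (x s) (u s)).

Definition box (R : realType) (q : nat) (lo hi : 'I_q -> R) : set 'cV[R]_q :=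
  [set th | forall i, lo i <= th i 0 <= hi i].

Definition is_min_coord (R : realType) (q : nat) (S : set 'cV[R]_q) (i : 'I_q) (v : R) :=
  (exists2 th, S th & th i 0 = v) /\ (forall th, S th -> v <= th i 0).
Definition is_max_coord (R : realType) (q : nat) (S : set 'cV[R]_q) (i : 'I_q) (v : R) :=
  (exists2 th, S th & th i 0 = v) /\ (forall th, S th -> th i 0 <= v).

(* LP feasible set at step k >= 1, given the previous box Xi_{k-1} = box lo hi *)
Definition feasible (R : realType) (n q : nat) (eps : R) (Mk : nat)
    (dX Fc Gc : nat -> 'cV[R]_n) (S : nat -> 'M[R]_(n, q))
    (lo hi : 'I_q -> R) : set 'cV[R]_q :=
  [set th | (forall j, (j < Mk)%N -> forall r : 'I_n,
      - eps <= (dX j - Fc j - Gc j - S j *m th) r 0 <= eps)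
    /\ box lo hi th].

(* Main.v *)
Require Import Defs.
From HB Require Import structures.
From mathcomp Require Import all_boot all_order all_algebra.
From mathcomp Require Import all_classical all_reals all_analysis.
From mathcomp Require Import ring.
Import Order.TTheory GRing.Theory Num.Theory.
Import numFieldNormedType.Exports.
Local Open Scope classical_set_scope.
Local Open Scope ring_scope.

Section H.
Context {R : realType}.
Local Notation mu := (@lebesgue_measure R).

Lemma Rint_sum (D : set R) (mD : measurable D) (I : Type) (s : seq I) (hs : I -> R -> R) :
  (forall i, mu.-integrable D (EFin \o hs i)) ->
  mu.-integrable D (EFin \o (fun x => \sum_(i <- s) hs i x)) /\
  \int[mu]_(x in D) (\sum_(i <- s) hs i x) = \sum_(i <- s) \int[mu]_(x in D) hs i x.
Proof.
move=> hi; elim: s => [|i s [IH1 IH2]].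
  split.
    eapply (@eq_integrable _ _ _ mu D mD (cst 0 : R -> \bar R)); [|exact: integrable0].
    by move=> x _ /=; rewrite big_nil.
  rewrite big_nil; under eq_Rintegral do rewrite big_nil.
  by rewrite Rintegral_cst// mul0r.
split.
  eapply (@eq_integrable _ _ _ mu D mD (fun x => adde (hs i x)%:E (\sum_(j <- s) hs j x)%:E)); last first.
    exact: (integrableD _ (hi i) IH1).
    by move=> x _ /=; rewrite big_cons EFinD.
under eq_Rintegral do rewrite big_cons.
by rewrite RintegralD// IH2 big_cons.
Qed.

Lemma Rint_ae (a b : R) (h1 h2 : R -> R) : a <= b ->
  measurable_fun `[a, b] h2 -> {in `]a, b[, h1 =1 h2} ->
  \int[mu]_(x in `[a, b]) h1 x = \int[mu]_(x in `[a, b]) h2 x.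
Proof.
move=> ab mh2 e.
have eqab : [set` `[a, b]] = ([set a] `|` [set` `]a, b[]) `|` [set b].
  apply/seteqP; split => x /=.
    rewrite in_itv/= => /andP[ax xb].
    case: (eqVneq x a) => [->|xa]; first by left; left.
    case: (eqVneq x b) => [->|xb']; first by right.
    by left; right; rewrite in_itv/= !lt_neqAle ax xb eq_sym xa xb'.
  by rewrite !in_itv/= => -[[->|/andP[/ltW -> /ltW ->]]|->]//; rewrite ?lexx ab.
rewrite /Rintegral; congr fine.
apply: ae_eq_integral => //.
- apply/measurable_realfun.measurable_EFinP; rewrite eqab.
  apply/measurable_funU => //; first exact: measurableU.
  split; last exact: measurable_fun_set1.
  apply/measurable_funU => //; split; first exact: measurable_fun_set1.
  apply: (@eq_measurable_fun _ _ _ _ _ h2).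
    by move=> x xi; rewrite e //; exact: (set_mem xi).
  apply: measurable_funS mh2 => //.
  by move=> x; rewrite /= !in_itv/= => /andP[/ltW -> /ltW ->].
- exact/measurable_realfun.measurable_EFinP.
- have N : mu.-negligible ([set a] `|` [set b]).
    apply: negligibleU; apply/negligibleP => //; exact: lebesgue_measure_set1.
  apply: negligibleS N => x /= H.
  apply: contrapT => H'; apply: H => xab; congr EFin.
  have /andP[ax xb] : a <= x <= b by move: xab; rewrite /= in_itv.
  rewrite e// in_itv/= !lt_neqAle ax xb !andbT.
  by apply/andP; split; apply/eqP => E; apply: H'; [left|right].
Qed.

Lemma integrableMr (D : set R) (mD : measurable D) (h : R -> R) (k : R) :
  mu.-integrable D (EFin \o h) -> mu.-integrable D (EFin \o (fun s => h s * k)).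
Proof.
move=> ih.
eapply (@eq_integrable _ _ _ mu D mD (fun s => ((h s)%:E * k%:E)%E)); last first.
  exact: integrableZr.
by move=> s _ /=; rewrite EFinM.
Qed.
End H.

Lemma key (R : realType) (n p m : nat)
  (f : 'cV[R]_n -> 'cV[R]_n) (g : 'cV[R]_n -> 'M[R]_(n, m))
  (F : 'cV[R]_n -> 'M[R]_(n, p)) (G : 'cV[R]_n -> 'M[R]_(n, m))
  (theta : 'cV[R]_(p + m))
  (I : set R) (x : R -> 'cV[R]_n) (u : R -> 'cV[R]_m) (dt : R) (tau : R) :
  is_interval I -> I 0 ->
  is_solution f g F G theta I x u ->
  (forall t, I t -> dt <= t ->
     (forall i : 'I_n, (@lebesgue_measure R).-integrable `[t - dt, t]
        (EFin \o (fun s => f (x s) i 0))) /\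
     (forall i : 'I_n, (@lebesgue_measure R).-integrable `[t - dt, t]
        (EFin \o (fun s => (g (x s) *m u s) i 0))) /\
     (forall (i : 'I_n) (j : 'I_(p + m)), (@lebesgue_measure R).-integrable `[t - dt, t]
        (EFin \o (fun s => phi F G (x s) (u s) i j)))) ->
  0 < dt -> I tau -> dt <= tau ->
  DeltaX dt x tau - calF f dt x tau - calG g dt x u tau - calS F G dt x u tau *m theta = 0.
Proof.
move=> Iint I0 sol integ dt0 Itau dttau.
have [iF [iG iP]] := integ _ Itau dttau.
apply/matrixP => r c; rewrite (ord1 c) {c}.
rewrite /DeltaX /calF /calG /calS /mxint !mxE.
under eq_bigr do rewrite mxE.
set a := tau - dt.
have ab : a <= tau by rewrite /a lerBlDr lerDl ltW.
have mab : measurable [set` `[a, tau]] by [].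
pose h s := f (x s) r 0 + (g (x s) *m u s) r 0 +
  \sum_(j < p + m) phi F G (x s) (u s) r j * theta j 0.
have [isum esum] := @Rint_sum _ _ mab _ (index_enum 'I_(p + m))
   (fun j s => phi F G (x s) (u s) r j * theta j 0)
   (fun j => @integrableMr _ _ mab _ (theta j 0) (iP r j)).
have i12 : (@lebesgue_measure R).-integrable `[a, tau] (EFin \o (fun s => f (x s) r 0 + (g (x s) *m u s) r 0)).
  eapply (@eq_integrable _ _ _ (@lebesgue_measure R) _ _ (fun s => adde (EFin (f (x s) r 0)) (EFin ((g (x s) *m u s) r 0)))); last first.
    exact: (integrableD _ (iF r) (iG r)).
  by move=> s _ /=; rewrite EFinD.
have ih : (@lebesgue_measure R).-integrable `[a, tau] (EFin \o h).
  eapply (@eq_integrable _ _ _ (@lebesgue_measure R) _ _ (fun s => adde (EFin (f (x s) r 0 + (g (x s) *m u s) r 0)) (EFin (\sum_(j < p + m) phi F G (x s) (u s) r j * theta j 0)))); last first.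
    exact: (integrableD _ i12 isum).
  by move=> s _ /=; rewrite EFinD.
rewrite (@Rint_ae _ a tau _ h ab); last first.
- move=> s; rewrite in_itv/= => /andP[aS sb].
  have int : interior I s.
    have s0 : s \in `]0, tau[.
      by rewrite in_itv/= sb andbT (le_lt_trans _ aS)// /a subr_ge0.
    apply: filterS (near_in_itvoo s0) => z; rewrite in_itv/= => /andP[z0 zt].
    by apply: (Iint 0 tau) => //; rewrite !ltW.
  have [_ E] := sol s int.
  have := congr1 (fun M : 'cV[R]_n => M r 0) E.
  by rewrite /xdot !mxE => ->; rewrite /h mxE.
- have mh := measurable_int _ ih. move/measurable_realfun.measurable_EFinP: mh. exact.
rewrite /h RintegralD // RintegralD //.
rewrite esum.
rewrite (eq_bigr (fun i => \int[@lebesgue_measure R]_(s in `[a, tau]) phi F G (x s) (u s) r i * theta i 0)); last first.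
  by move=> i _; rewrite RintegralZr.
set A := Rintegral _ _ _. set B := Rintegral _ _ _. set S := \sum_(_ <- _) _.
ring. Unshelve. all: exact: mab.
Qed.

Theorem lemma4 (R : realType) (n p m : nat)
  (f : 'cV[R]_n -> 'cV[R]_n) (g : 'cV[R]_n -> 'M[R]_(n, m))
  (F : 'cV[R]_n -> 'M[R]_(n, p)) (G : 'cV[R]_n -> 'M[R]_(n, m))
  (thlo thhi : 'I_(p + m) -> R) (theta : 'cV[R]_(p + m))
  (I : set R) (x : R -> 'cV[R]_n) (u : R -> 'cV[R]_m)
  (dt eps : R) (tk : nat -> R)
  (M : R -> nat) (dXs Fs Gs : R -> nat -> 'cV[R]_n) (Ss : R -> nat -> 'M[R]_(n, p + m))
  (lo hi : nat -> 'I_(p + m) -> R) :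
  locally_lipschitz f -> locally_lipschitz g ->
  box thlo thhi theta ->
  is_interval I -> I `<=` `[0, +oo[ -> I 0 ->
  is_solution f g F G theta I x u ->
  (* the integrals in the definitions of calF, calG, calS exist *)
  (forall t, I t -> dt <= t ->
     (forall i : 'I_n, (@lebesgue_measure R).-integrable `[t - dt, t]
        (EFin \o (fun s => f (x s) i 0))) /\
     (forall i : 'I_n, (@lebesgue_measure R).-integrable `[t - dt, t]
        (EFin \o (fun s => (g (x s) *m u s) i 0))) /\
     (forall (i : 'I_n) (j : 'I_(p + m)), (@lebesgue_measure R).-integrable `[t - dt, t]
        (EFin \o (fun s => phi F G (x s) (u s) i j)))) ->
  0 < dt -> 0 < eps ->
  tk 0%N = 0 -> (forall k, tk k < tk k.+1) ->
  (* history stack *)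
  (forall t, 0 <= t -> forall j, (j < M t)%N ->
     exists tau, I tau /\ dt <= tau <= t /\
       dXs t j = DeltaX dt x tau /\ Fs t j = calF f dt x tau /\
       Gs t j = calG g dt x u tau /\ Ss t j = calS F G dt x u tau) ->
  (* the recursion Xi_0 = Theta, Xi_k = box of LP minima / maxima *)
  lo 0%N = thlo -> hi 0%N = thhi ->
  (forall k (i : 'I_(p + m)),
     is_min_coord (feasible eps (M (tk k.+1)) (dXs (tk k.+1)) (Fs (tk k.+1))
                     (Gs (tk k.+1)) (Ss (tk k.+1)) (lo k) (hi k)) i (lo k.+1 i) /\
     is_max_coord (feasible eps (M (tk k.+1)) (dXs (tk k.+1)) (Fs (tk k.+1))
                     (Gs (tk k.+1)) (Ss (tk k.+1)) (lo k) (hi k)) i (hi k.+1 i)) ->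
  (forall k, (0 < k)%N ->
     box (lo k) (hi k) `<=` box (lo k.-1) (hi k.-1) /\
     box (lo k.-1) (hi k.-1) `<=` box thlo thhi) /\
  (forall k, box (lo k) (hi k) theta).
Proof.
move=> _ _ boxth Iint _ I0 sol integ dt0 eps0 tk0 tkinc hist lo0 hi0 rec.
have tkge0 : forall k, 0 <= tk k.
  elim => [|k IH]; first by rewrite tk0.
  exact: le_trans IH (ltW (tkinc k)).
have feas : forall k, box (lo k) (hi k) theta ->
    feasible eps (M (tk k.+1)) (dXs (tk k.+1)) (Fs (tk k.+1))
      (Gs (tk k.+1)) (Ss (tk k.+1)) (lo k) (hi k) theta.
  move=> k bk; split => // j jM r.
  have [tau [Itau [/andP[dttau _] [-> [-> [-> ->]]]]]] := hist _ (tkge0 k.+1) j jM.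
  rewrite (@key _ _ _ _ _ _ _ _ _ _ _ _ _ _ Iint I0 sol integ dt0 Itau dttau) mxE.
  by rewrite oppr_le0 ltW.
have thk : forall k, box (lo k) (hi k) theta.
  elim => [|k IH]; first by rewrite lo0 hi0.
  move=> i; have [[_ mn] [_ mx]] := rec k i; have fe := feas k IH.
  by apply/andP; split; [exact: mn | exact: mx].
have sub : forall k, box (lo k.+1) (hi k.+1) `<=` box (lo k) (hi k).
  move=> k th bth i; have [[[th1 f1 e1] _] [[th2 f2 e2] _]] := rec k i.
  have /andP[l1 _] := f1.2 i.
  have /andP[_ u2] := f2.2 i.
  have /andP[a1 b1] := bth i.
  apply/andP; split.
    by apply: le_trans l1 _; rewrite e1.
  by apply: (le_trans b1); rewrite -e2.
have subT : forall k, box (lo k) (hi k) `<=` box thlo thhi.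
  elim => [|k IH]; first by rewrite lo0 hi0.
  exact: subset_trans (sub k) IH.
split; last exact: thk.
case => [|k] k0; first by rewrite ltnn in k0.
by split; [exact: sub | exact: subT].
Qed.
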